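(* Let $A$ and $B$ be nontrivial commutative groups. (a) The $\mathbb{Z}[A]$-submodule of $B^A$ generated by $\{\delta_{0,b}: b\in B\}$ is the set of all $f\in B^A$ with $f(a)=0$ for all but finitely many $a\in A$. Hence this set generates $B^A$ as a $\mathbb{Z}[A]$-module if and only if $A$ is finite. (b) If $A$ is finite and $B=\mathbb{Z}/n\mathbb{Z}$ for some $n\ge2$, then the $(\mathbb{Z}/n\mathbb{Z})[A]$-module $B^A$ is free of rank $1$, generated by $\delta_{a,u}$ for any $a\in A$ and any unit $u\in(\mathbb{Z}/n\mathbb{Z})^\times$. (c) If $A$ is finite and $B$ has finite exponent, then for every $a\in A$ and every $b\in B$ of order $\exp(B)$ we have $\delta(A,B)=\operatorname{fdeg}(\delta_{a,b})$.
   Context: For commutative groups $A,B$, $B^A$ denotes the commutative group (under pointwise addition) of all maps $A\to B$. It is a $\mathbb{Z}[A]$-module via $(\sum_a n_a[a])f=\sum_a n_a\tau_a f$, where $(\tau_a f)(x)=f(x+a)$; when $B$ has finite exponent $n$ this is a $(\mathbb{Z}/n\mathbb{Z})[A]$-module. For $a\in A$, $\Delta_a f=\tau_af-f$. Let $\widetilde{\mathbb N}=\mathbb N\cup\{-\infty,\infty\}$, totally ordered with $-\infty$ least and $\infty$ greatest. The functional degree $\operatorname{fdeg}(f)$ of $f\in B^A$ is: $-\infty$ if $f=0$; otherwise the least $n\in\mathbb N$ such that $\Delta_{a_1}\cdots\Delta_{a_{n+1}}f=0$ for all $a_1,\dots,a_{n+1}\in A$; and $\infty$ if no such $n$ exists.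 $\delta(A,B)=\sup\{\operatorname{fdeg}(f): f\in B^A\}$. For $a\in A$, $b\in B$, $\delta_{a,b}\in B^A$ is given by $\delta_{a,b}(a)=b$ and $\delta_{a,b}(x)=0$ for $x\neq a$. *)

(* Defs.v *)
From HB Require Import structures.
From mathcomp Require Import all_boot all_order all_algebra.
From Stdlib Require Import ClassicalEpsilon.
Set Implicit Arguments. Unset Strict Implicit. Unset Printing Implicit Defensive.
Import GRing.Theory.
Local Open Scope ring_scope.

Definition nontrivial (G : zmodType) : Prop := exists x : G, x != 0.

Definition finite_type (T : eqType) : Prop := exists s : seq T, forall x, x \in s.

Definition delta (A B : zmodType) (a : A) (b : B) : A -> B :=
  fun x => if x == a then b else 0.

Definition tau (A B : zmodType) (a : A) (f : A -> B) : A -> B := fun x => f (x + a).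
Definition Delta (A B : zmodType) (a : A) (f : A -> B) : A -> B :=
  fun x => f (x + a) - f x.

Definition fin_supp (A B : zmodType) (f : A -> B) : Prop :=
  exists s : seq A, forall x, x \notin s -> f x = 0.

(* Elements of the group ring Z[A] are represented as formal sums
   sum_a n_a [a], i.e. lists of pairs (n_a, a); the action on B^A is
   (sum n_a [a]) f = sum n_a tau_a f. *)
Definition ZA_act (A B : zmodType) (r : seq (int * A)) (f : A -> B) : A -> B :=
  fun x => \sum_(p <- r) (tau p.2 f x) *~ p.1.

Definition ZA_span (A B : zmodType) (S : (A -> B) -> Prop) (f : A -> B) : Prop :=
  exists (k : nat) (r : 'I_k -> seq (int * A)) (g : 'I_k -> (A -> B)),
    (forall i, S (g i)) /\ (forall x, f x = \sum_(i < k) ZA_act (r i) (g i) x).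

Definition ZnA_act (A : finZmodType) (n : nat) (r : {ffun A -> 'Z_n})
    (f : A -> 'Z_n) : A -> 'Z_n :=
  fun x => \sum_(a : A) r a * tau a f x.

Inductive enat := NegInf | Fin of nat | PosInf.

Definition enat_le (x y : enat) : Prop :=
  match x, y with
  | NegInf, _ => True
  | _, PosInf => True
  | Fin m, Fin n => (m <= n)%N
  | _, _ => False
  end.

Definition iterDelta (A B : zmodType) (s : seq A) (f : A -> B) : A -> B :=
  foldr (fun a g => Delta a g) f s.

Definition vanishes (A B : zmodType) (n : nat) (f : A -> B) : Prop :=
  forall s : seq A, size s = n.+1 -> forall x, iterDelta s f x = 0.

Definition fdeg_spec (A B : zmodType) (f : A -> B) (d : enat) : Prop :=
  match d with
  | NegInf => forall x, f x = 0
  | Fin n => (exists x, f x <> 0) /\ vanishes n f /\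
             (forall m, vanishes m f -> (n <= m)%N)
  | PosInf => (exists x, f x <> 0) /\ (forall n, ~ vanishes n f)
  end.

(* fdeg f: the unique d satisfying the specification (which always exists). *)
Definition fdeg (A B : zmodType) (f : A -> B) : enat :=
  epsilon (inhabits NegInf) (fdeg_spec f).

Definition is_lub_enat (S : enat -> Prop) (d : enat) : Prop :=
  (forall e, S e -> enat_le e d) /\
  (forall d', (forall e, S e -> enat_le e d') -> enat_le d d').

(* delta(A,B) = sup { fdeg f : f in B^A } (the sup exists in N ~). *)
Definition deltaAB (A B : zmodType) : enat :=
  epsilon (inhabits NegInf)
    (is_lub_enat (fun e => exists f : A -> B, fdeg f = e)).

Definition has_order (B : zmodType) (b : B) (m : nat) : Prop :=
  (0 < m)%N /\ b *+ m = 0 /\ (forall k, (0 < k)%N -> b *+ k = 0 -> (m <= k)%N).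

Definition is_exponent (B : zmodType) (e : nat) : Prop :=
  (0 < e)%N /\ (forall b : B, b *+ e = 0) /\
  (forall k, (0 < k)%N -> (forall b : B, b *+ k = 0) -> (e <= k)%N).

(* Main.v *)
Require Import Defs.
From HB Require Import structures.
From mathcomp Require Import all_boot all_order all_algebra.
From Stdlib Require Import ClassicalEpsilon Classical.
Set Implicit Arguments. Unset Strict Implicit. Unset Printing Implicit Defensive.
Import GRing.Theory.
Local Open Scope ring_scope.

Lemma span_fin (A B : zmodType) (f : A -> B) :
  ZA_span (fun g => exists b : B, g = delta 0 b) f -> fin_supp f.
Proof.
move=> [k [r [g [hS hf]]]].
exists (flatten [seq [seq - p.2 | p <- r i] | i <- enum 'I_k]) => x hx.
rewrite hf big1 // => i _; have [bi ->] := hS i.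
rewrite /ZA_act big1_seq // => p /andP[_ pin]; rewrite /tau /delta.
case: eqP => [h|_]; last by rewrite mul0rz.
exfalso; move/negP: hx; apply; apply/flattenP.
exists [seq - p.2 | p <- r i]; first by apply/mapP; exists i => //; rewrite mem_enum.
by apply/mapP; exists p => //; apply/eqP; rewrite -addr_eq0; apply/eqP.
Qed.

Lemma fin_span (A B : zmodType) (f : A -> B) :
  fin_supp f -> ZA_span (fun g => exists b : B, g = delta 0 b) f.
Proof.
move=> [s hs]; set t := undup s.
exists (size t), (fun i => [:: (1%:Z, - nth 0 t i)]),
  (fun i => delta 0 (f (nth 0 t i))).
split; first by move=> i; eexists.
move=> x; rewrite /ZA_act.
under eq_bigr => i _ do rewrite big_seq1 /= /tau /delta mulr1z.
rewrite -(big_mkord xpredT (fun i => if x - nth 0 t i == 0 then f (nth 0 t i) else 0)).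
rewrite -(big_nth 0 xpredT (fun y => if x - y == 0 then f y else 0)).
case: (boolP (x \in t)) => hx.
  rewrite (bigD1_seq x hx (undup_uniq s)) /= subrr eqxx big1 ?addr0 // => y hy.
  by rewrite subr_eq0 eq_sym (negbTE hy).
rewrite hs; last by rewrite -mem_undup.
rewrite big1_seq // => y /andP[_ hy]; rewrite subr_eq0.
case: eqP => // exy.
by rewrite exy hy in hx.
Qed.

Lemma part_a (A B : zmodType) : nontrivial A -> nontrivial B ->
     (forall f : A -> B,
        ZA_span (fun g => exists b : B, g = delta 0 b) f <-> fin_supp f) /\
     ((forall f : A -> B, ZA_span (fun g => exists b : B, g = delta 0 b) f)
        <-> finite_type A).
Proof.
move=> _ [b0 hb0].
have h1 : forall f : A -> B,
    ZA_span (fun g => exists b : B, g = delta 0 b) f <-> fin_supp f.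
  by move=> f; split; [apply: span_fin | apply: fin_span].
split=> //; split.
  move=> H; have [s hs] := (h1 (fun _ => b0)).1 (H _).
  exists s => x; apply/negPn/negP => hx.
  by move: (hs x hx) => /eqP; apply/negP.
move=> [s hs] f; apply/h1; exists s => x hx.
by rewrite hs in hx.
Qed.

Lemma sub_sub (A : zmodType) (a x : A) : a - (a - x) = x.
Proof. by rewrite opprB addrC subrK. Qed.

Lemma Zn_act_delta (A : finZmodType) n (r : {ffun A -> 'Z_n}) a u x :
  ZnA_act r (delta a u) x = r (a - x) * u.
Proof.
rewrite /ZnA_act (bigD1 (a - x)) //= /tau /delta.
rewrite (addrC x (a - x)) subrK eqxx big1 ?addr0 // => c hc.
have -> : (x + c == a) = false.
  apply/negbTE; apply: contra hc => /eqP <-.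
  by rewrite addrC addKr.
by rewrite mulr0.
Qed.

Lemma part_b (A : finZmodType) (n : nat) : nontrivial A -> (1 < n)%N ->
     forall (a : A) (u : 'Z_n), u \is a GRing.unit ->
       (forall f : A -> 'Z_n, exists r : {ffun A -> 'Z_n},
          forall x, ZnA_act r (delta a u) x = f x) /\
       (forall r1 r2 : {ffun A -> 'Z_n},
          (forall x, ZnA_act r1 (delta a u) x = ZnA_act r2 (delta a u) x) ->
          r1 = r2).
Proof.
move=> _ _ a u hu; split.
  move=> f; exists [ffun c => f (a - c) * u^-1] => x.
  by rewrite Zn_act_delta ffunE divrK // sub_sub.
move=> r1 r2 h; apply/ffunP => c; have := h (a - c).
by rewrite !Zn_act_delta sub_sub; apply: (mulIr hu).
Qed.

Definition Kf (A : zmodType) (s : seq A) (z : A) : int :=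
  iterDelta s (delta (0:A) (1:int)) z.

Lemma iterDelta_sum (A : finZmodType) (B : zmodType) (s : seq A) (f : A -> B) x :
  iterDelta s f x = \sum_(y : A) f y *~ Kf s (x - y).
Proof.
elim: s x => [|t s IH] x /=.
  rewrite /Kf /= (bigD1 x) //= /delta subrr eqxx mulr1z big1 ?addr0 // => y hy.
  by rewrite subr_eq0 eq_sym (negbTE hy) mulr0z.
rewrite /Delta !IH -sumrB; apply: eq_bigr => y _.
by rewrite -mulrzBr /Kf /= /Delta (addrAC x t (-y)).
Qed.

Lemma iterDelta_delta (A : finZmodType) (B : zmodType) (s : seq A) (a : A) (b : B) x :
  iterDelta s (delta a b) x = b *~ Kf s (x - a).
Proof.
rewrite iterDelta_sum (bigD1 a) //= /delta eqxx big1 ?addr0 // => y hy.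
by rewrite (negbTE hy) mul0rz.
Qed.

Lemma mulrz0_abs (B : zmodType) (c : B) (k : int) : (c *~ k == 0) = (c *+ `|k|%N == 0).
Proof.
case: k => n; first by [].
by rewrite NegzE mulrNz oppr_eq0 -mulrz_nat natz.
Qed.

Lemma order_dvd (B : zmodType) (b : B) e m : has_order b e -> b *+ m = 0 -> (e %| m)%N.
Proof.
move=> [e0 [be emin]] bm.
have hq : forall q, b *+ (e * q) = 0.
  by move=> q; rewrite mulrnA be; apply: mul0rn.
have bmod : b *+ (m %% e)%N = 0.
  move: bm; rewrite {1}(div.divn_eq m e) mulrnDr (mulnC (m %/ e)%N) hq.
  by rewrite add0r.
apply/eqP.
case: (posnP (m %% e)%N) => // hpos.
by have := emin _ hpos bmod; rewrite leqNgt ltn_pmod.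
Qed.

Lemma exp_kill (B : zmodType) e (c : B) m : is_exponent B e -> (e %| m)%N -> c *+ m = 0.
Proof.
move=> [_ [he _]] /dvdnP [q ->].
by rewrite mulnC mulrnA he; apply: mul0rn.
Qed.

Lemma vanish_transfer (A : finZmodType) (B : zmodType) e (a : A) (b : B) n (f : A -> B) :
  is_exponent B e -> has_order b e -> vanishes n (delta a b) -> vanishes n f.
Proof.
move=> hE hO hv s hs x.
rewrite iterDelta_sum big1 // => y _.
apply/eqP; rewrite mulrz0_abs; apply/eqP; apply: exp_kill hE _.
apply: order_dvd hO _.
have := hv s hs (x - y + a); rewrite iterDelta_delta addrK.
by move/eqP; rewrite mulrz0_abs => /eqP.
Qed.

Lemma fdeg_specP (A B : zmodType) (f : A -> B) : fdeg_spec f (fdeg f).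
Proof.
apply: epsilon_spec.
case: (classic (forall x, f x = 0)) => [h|h]; first by exists NegInf.
have nz : exists x, f x <> 0 by apply: not_all_ex_not.
case: (classic (exists n, vanishes n f)) => [[n hn]|hno].
  have [m [hm hmin]] : exists m, vanishes m f /\ forall k, vanishes k f -> (m <= k)%N.
    apply: NNPP => H.
    have : forall k j, (j <= k)%N -> ~ vanishes j f.
      elim=> [|k IH] j hj hv.
        apply: H; exists j; split=> // k' _.
        by move: hj; rewrite leqn0 => /eqP ->.
      case: (leqP j k) => hjk; first exact: IH hjk hv.
      have ej : j = k.+1 by apply/eqP; rewrite eqn_leq hj hjk.
      apply: H; exists j; split=> // k' hk'; rewrite leqNgt; apply/negP => hlt.
      by apply: (IH k') _ hk'; rewrite -ltnS -ej.
    by move=> /(_ n n (leqnn n)).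
  by exists (Fin m).
by exists PosInf; split=> // n hn; apply: hno; exists n.
Qed.

Lemma enat_anti x y : enat_le x y -> enat_le y x -> x = y.
Proof.
case: x; case: y => //= m n h1 h2.
by congr Fin; apply/eqP; rewrite eqn_leq h1 h2.
Qed.

Lemma part_c (A : finZmodType) (B : zmodType) (e : nat) :
     nontrivial A -> nontrivial B -> is_exponent B e ->
     forall (a : A) (b : B), has_order b e ->
       deltaAB A B = fdeg (delta a b).
Proof.
move=> _ [c0 hc0] hE a b hO.
have b0 : b != 0.
  apply/eqP => b0; move: hO hE => [e0 [_ emin]] [_ [he _]].
  have e1 : e = 1%N.
    by apply/eqP; rewrite eqn_leq e0 andbT; apply: emin => //; rewrite b0; apply: mul0rn.
  by move/eqP: hc0; apply; have := he c0; rewrite e1.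
have hd := fdeg_specP (delta a b).
have ub : forall f : A -> B, enat_le (fdeg f) (fdeg (delta a b)).
  move=> f; have hf := fdeg_specP f.
  move: hd hf; case: (fdeg (delta a b)) => [|n|] /=.
  - move=> hd; have := hd a; rewrite /delta eqxx => hb.
    by rewrite hb eqxx in b0.
  - move=> [_ [hv _]].
    case: (fdeg f) => [|m|] //=.
      by move=> [_ [_ hmin]]; apply: hmin; exact: vanish_transfer hE hO hv.
    by move=> [_ hno]; case: (hno n); exact: vanish_transfer hE hO hv.
  - by case: (fdeg f).
have hl : is_lub_enat (fun e => exists f : A -> B, fdeg f = e) (fdeg (delta a b)).
  split; first by move=> e' [f <-]; exact: ub.
  by move=> d' h; apply: h; exists (delta a b).
have hl2 := epsilon_spec (inhabits NegInf) _ (ex_intro _ _ hl).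
rewrite /deltaAB; apply: enat_anti.
  by apply: hl2.2 => e' he'; apply: hl.1.
by apply: hl.2 => e' he'; apply: hl2.1.
Qed.

Theorem mainTheorem7 :
  (* (a) *)
  (forall (A B : zmodType), nontrivial A -> nontrivial B ->
     (forall f : A -> B,
        ZA_span (fun g => exists b : B, g = delta 0 b) f <-> fin_supp f) /\
     ((forall f : A -> B, ZA_span (fun g => exists b : B, g = delta 0 b) f)
        <-> finite_type A)) /\
  (* (b) *)
  (forall (A : finZmodType) (n : nat), nontrivial A -> (1 < n)%N ->
     forall (a : A) (u : 'Z_n), u \is a GRing.unit ->
       (forall f : A -> 'Z_n, exists r : {ffun A -> 'Z_n},
          forall x, ZnA_act r (delta a u) x = f x) /\
       (forall r1 r2 : {ffun A -> 'Z_n},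
          (forall x, ZnA_act r1 (delta a u) x = ZnA_act r2 (delta a u) x) ->
          r1 = r2)) /\
  (* (c) *)
  (forall (A : finZmodType) (B : zmodType) (e : nat),
     nontrivial A -> nontrivial B -> is_exponent B e ->
     forall (a : A) (b : B), has_order b e ->
       deltaAB A B = fdeg (delta a b)).
Proof.
split; first exact: part_a.
split; first exact: part_b.
exact: part_c.
Qed.
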